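(* Let $(Q,\le_Q)$ be a non-empty quasi-order. The map $f:\mathsf{T_f}(Q)\to i^F_{\omega^\omega}(Q)$ is an order-embedding: for all $\sigma,\tau\in\mathsf{T_f}(Q)$, $\sigma\le_T\tau$ iff $f(\sigma)\preceq f(\tau)$.
   Context: Trees: $\mathsf{T_f}(Q)$ is the smallest class containing the leaf $\cdot q$ for each $q\in Q$, and containing $\cdot(\tau_0,\dots,\tau_{k-1})$ (an unlabelled root whose children are the $\tau_i$) for every finite set $\{\tau_0,\dots,\tau_{k-1}\}\subseteq\mathsf{T_f}(Q)$ with $k\ge1$. Its order $\le_T$ is defined recursively: - $\cdot x\le_T\cdot y$ iff $x\le_Q y$; - $\cdot x\le_T\cdot(\tau_j)_{j<l}$ iff $\cdot x\le_T\tau_j$ for some $j$; - $\cdot(\sigma_i)_{i<k}\le_T\cdot(\tau_j)_{j<l}$ iff every $\sigma_i$ is $\le_T$ some $\tau_j$; - a non-leaf tree is never $\le_T$ a leaf. Sequences: a transfinite sequence over $Q$ of length $\alpha$ (with $\alpha\ne0$) is a function $\sigma:\alpha\to Q$. Define $\sigma\preceq\tau$ if there is a strictly increasing $f:|\sigma|\to|\tau|$ with $\sigma(i)\le_Q\tau(f(i))$ for all $i$. The concatenation $\sigma+\tau$ places a copy of $\tau$ after $\sigma$. The sequence $\rho^\omega$ has length $|\rho|\cdot\omega$ and value $\rho^\omega(|\rho|\cdot\delta+\iota)=\rho(\iota)$ for $\delta<\omega$ and $\iota<|\rho|$. The sequence $\sigma$ is indecomposable if it embeds into each of its proper tails $i\mapsto\sigma(\delta+i)$,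 $0<\delta<|\sigma|$. $i^F_{\omega^\omega}(Q)$ is the set of indecomposable sequences over $Q$ with finite range and length $<\omega^\omega$, ordered by $\preceq$. The map $f$ is defined recursively: - $f(\cdot q)=\langle q\rangle$, the length-one sequence; - $f(\cdot(\tau_0,\dots,\tau_{k-1}))=(f(\tau_0)+f(\tau_1)+\cdots+f(\tau_{k-1}))^\omega$. A tree of height $n$ is sent to a sequence of length $\omega^n$ whose range is the set of leaf labels, so $f$ indeed lands in $i^F_{\omega^\omega}(Q)$. *)

(* Defs.v *)
From Stdlib Require Import List.
Import ListNotations.
Set Implicit Arguments.

(** Finite trees T_f(Q): a leaf labelled by q, or an unlabelled root with a
    (non-empty, see [wf_tree]) finite family of children, given as a list. *)
Inductive tree (Q : Type) : Type :=
| Leaf : Q -> tree Q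
| Node : list (tree Q) -> tree Q.
Arguments Leaf {Q} _.
Arguments Node {Q} _.

Inductive wf_tree {Q : Type} : tree Q -> Prop :=
| wf_leaf : forall q, wf_tree (Leaf q)
| wf_node : forall ts, ts <> [] -> (forall t, In t ts -> wf_tree t) ->
    wf_tree (Node ts).

Inductive leT {Q : Type} (leQ : Q -> Q -> Prop) : tree Q -> tree Q -> Prop :=
| leT_leaf_leaf : forall x y, leQ x y -> leT leQ (Leaf x) (Leaf y)
| leT_leaf_node : forall x ts t, In t ts -> leT leQ (Leaf x) t ->
    leT leQ (Leaf x) (Node ts)
| leT_node_node : forall ss ts,
    (forall s, In s ss -> exists t, In t ts /\ leT leQ s t) ->
    leT leQ (Node ss) (Node ts).

(** Transfinite sequences: a value function on an index set carrying a strict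
    (well-)order; the length is the order type of the index set.  All
    sequences built below have well-ordered index sets. *)
Record tseq (Q : Type) : Type := TSeq {
  tidx : Type;
  tlt : tidx -> tidx -> Prop;
  tval : tidx -> Q }.
Arguments TSeq {Q} _ _ _.

Definition seq_embeds {Q : Type} (leQ : Q -> Q -> Prop) (s t : tseq Q) : Prop :=
  exists g : tidx s -> tidx t,
    (forall i j, tlt s i j -> tlt t (g i) (g j)) /\
    (forall i, leQ (tval s i) (tval t (g i))).

Definition seq_single {Q : Type} (q : Q) : tseq Q :=
  TSeq unit (fun _ _ => False) (fun _ => q).

Definition seq_empty (Q : Type) : tseq Q :=
  TSeq Empty_set (fun _ _ => False) (fun e => match e with end).

Definition sum_lt {A B : Type} (ltA : A -> A -> Prop) (ltB : B -> B -> Prop)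
  (x y : A + B) : Prop :=
  match x, y with
  | inl a, inl a' => ltA a a'
  | inr b, inr b' => ltB b b'
  | inl _, inr _ => True
  | inr _, inl _ => False
  end.

Definition seq_cat {Q : Type} (s t : tseq Q) : tseq Q :=
  TSeq (tidx s + tidx t)%type (sum_lt (tlt s) (tlt t))
       (fun x => match x with inl i => tval s i | inr j => tval t j end).

Definition seq_cat_list {Q : Type} (l : list (tseq Q)) : tseq Q :=
  fold_right seq_cat (seq_empty Q) l.

(** rho^omega : indices |rho|*delta + iota, i.e. pairs (delta, iota) with
    delta < omega, ordered lexicographically (delta first). *)
Definition seq_omega {Q : Type} (r : tseq Q) : tseq Q :=
  TSeq (nat * tidx r)%type
       (fun x y => fst x < fst y \/ (fst x = fst y /\ tlt r (snd x) (snd y)))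
       (fun x => tval r (snd x)).

Fixpoint ftree {Q : Type} (t : tree Q) : tseq Q :=
  match t with
  | Leaf q => seq_single q
  | Node ts => seq_omega (seq_cat_list (map ftree ts))
  end.

(* Main.v *)
Require Import Defs.
From Stdlib Require Import List Classical Lia.
Import ListNotations.
Set Implicit Arguments.

Fixpoint tree_ind2 {Q : Type} (P : tree Q -> Prop)
  (HL : forall q, P (Leaf q))
  (HN : forall ts, (forall t, In t ts -> P t) -> P (Node ts)) (t : tree Q) : P t :=
  match t with
  | Leaf q => HL q
  | Node ts => HN ts
      ((fix aux (l : list (tree Q)) : forall t, In t l -> P t :=
          match l with
          | [] => fun t H => False_ind _ H
          | x :: l' => fun t H =>
              match H with
              | or_introl e => eq_rect _ P (tree_ind2 P HL HN x) _ e
              | or_intror H' => aux l' t H'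
              end
          end) ts)
  end.

Lemma emb_trans Q (leQ : Q -> Q -> Prop)
  (trans : forall x y z, leQ x y -> leQ y z -> leQ x z) s t u :
  seq_embeds leQ s t -> seq_embeds leQ t u -> seq_embeds leQ s u.
Proof.
  intros [g [Hg Hv]] [h [Hh Hw]]. exists (fun i => h (g i)). split; eauto.
Qed.

Lemma comp_inj Q (L : list (tseq Q)) s : In s L ->
  exists inj : tidx s -> tidx (seq_cat_list L),
    (forall i j, tlt s i j -> tlt _ (inj i) (inj j)) /\
    (forall i, tval _ (inj i) = tval s i).
Proof.
  induction L as [|x L IH]; simpl; intros H; [contradiction|].
  destruct H as [<-|H].
  - exists (fun i => inl i). split; simpl; auto.
  - destruct (IH H) as [inj [H1 H2]]. exists (fun i => inr (inj i)).
    split; intros; simpl; auto.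
Qed.

Lemma comp_emb Q leQ (refl : forall x : Q, leQ x x) (L : list (tseq Q)) s : In s L ->
  seq_embeds leQ s (seq_cat_list L).
Proof.
  intros H. destruct (@comp_inj _ _ _ H) as [inj [H1 H2]]. exists inj. split; auto.
  intros i. rewrite H2. apply refl.
Qed.

Lemma cat_val Q (L : list (tseq Q)) (c : tidx (seq_cat_list L)) :
  exists s, In s L /\ exists a, tval s a = tval _ c.
Proof.
  induction L as [|x L IH]; simpl in c.
  - destruct c.
  - destruct c as [a|c].
    + exists x. split; [left; auto|]. exists a. reflexivity.
    + destruct (IH c) as [s [Hs [a Ha]]]. exists s. split; [right; auto|].
      exists a. simpl. exact Ha.
Qed.

Lemma single_emb Q (leQ : Q -> Q -> Prop) x t :
  (exists i, leQ x (tval t i)) -> seq_embeds leQ (seq_single x) t.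
Proof.
  intros [i Hi]. exists (fun _ => i). split; [intros ? ? []| intros; simpl; auto].
Qed.

Lemma single_emb_inv Q (leQ : Q -> Q -> Prop) x t :
  seq_embeds leQ (seq_single x) t -> exists i, leQ x (tval t i).
Proof. intros [g [_ Hv]]. exists (g tt). apply (Hv tt). Qed.

Lemma omega0 Q (leQ : Q -> Q -> Prop) (refl : forall x, leQ x x) s :
  seq_embeds leQ s (seq_omega s).
Proof.
  exists (fun a => (0, a)). split; simpl; auto.
Qed.

Lemma cat_bound Q (leQ : Q -> Q -> Prop) (L : list (tseq Q)) C :
  (forall s, In s L -> seq_embeds leQ s C) ->
  exists g : tidx (seq_cat_list L) -> nat * tidx C,
    (forall i j, tlt _ i j -> tlt (seq_omega C) (g i) (g j)) /\
    (forall i, leQ (tval _ i) (tval C (snd (g i)))) /\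
    (forall i, fst (g i) < length L).
Proof.
  induction L as [|x L IH]; intros H.
  - exists (fun e : Empty_set => match e with end).
    split; [intros []|split; intros []].
  - destruct (H x (or_introl eq_refl)) as [h [Hh Hv]].
    destruct IH as [g [Hg [Hgv Hgb]]]. { intros; apply H; right; auto. }
    exists (fun c : tidx x + tidx (seq_cat_list L) =>
      match c with inl a => (0, h a) | inr c => (S (fst (g c)), snd (g c)) end).
    split; [|split].
    + intros [a|c] [a'|c'] Hlt; simpl in *; try contradiction.
      * right; auto.
      * left; lia.
      * destruct (Hg _ _ Hlt) as [E|[E1 E2]]; [left; lia | right; split; auto].
    + intros [a|c]; simpl; auto.
    + intros [a|c]; simpl; [lia|]. specialize (Hgb c). lia.
Qed.

Lemma omega_bound Q (leQ : Q -> Q -> Prop) X C k (g : tidx X -> nat * tidx C) :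
  (forall i j, tlt X i j -> tlt (seq_omega C) (g i) (g j)) ->
  (forall i, leQ (tval X i) (tval C (snd (g i)))) ->
  (forall i, fst (g i) < k) ->
  seq_embeds leQ (seq_omega X) (seq_omega C).
Proof.
  intros Hg Hv Hb.
  exists (fun p : nat * tidx X => (fst p * k + fst (g (snd p)), snd (g (snd p)))).
  split.
  - intros [n x] [n' x'] [Hlt|[E Hlt]]; simpl in *.
    + left. pose proof (Hb x). pose proof (Hb x'). nia.
    + subst. destruct (Hg _ _ Hlt) as [E|[E1 E2]]; [left; lia| right; split; auto].
  - intros [n x]; simpl. apply Hv.
Qed.

Definition tailprop {Q} (leQ : Q -> Q -> Prop) (s : tseq Q) :=
  forall a, exists phi : tidx s -> tidx s,
    (forall i j, tlt s i j -> tlt s (phi i) (phi j)) /\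
    (forall b, leQ (tval s b) (tval s (phi b))) /\
    (forall b, phi b = a \/ tlt s a (phi b)).

Lemma tail_ftree Q (leQ : Q -> Q -> Prop) (refl : forall x, leQ x x) (t : tree Q) :
  tailprop leQ (ftree t).
Proof.
  destruct t as [q|ts]; simpl; intros a.
  - exists (fun b => b). split; [auto|split; [auto|]]. intros [] ; destruct a; auto.
  - destruct a as [n c].
    exists (fun p : nat * tidx (seq_cat_list (map ftree ts)) => (fst p + n + 1, snd p)).
    split; [|split].
    + intros [m x] [m' x'] [H|[E H]]; simpl in *; [left; lia| right; split; auto].
    + intros [m x]; simpl; auto.
    + intros [m x]; right; simpl; left; lia.
Qed.

Lemma split_cat Q (leQ : Q -> Q -> Prop)
  (trans : forall x y z, leQ x y -> leQ y z -> leQ x z) s X Y :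
  tailprop leQ s -> inhabited (tidx s) -> seq_embeds leQ s (seq_cat X Y) ->
  seq_embeds leQ s X \/ seq_embeds leQ s Y.
Proof.
  intros Ht [a0] [h [Hh Hv]].
  destruct (classic (exists a y, h a = inr y)) as [[a [y Ha]] | Hn].
  - right. destruct (Ht a) as [phi [P1 [P2 P3]]].
    assert (F : forall b, exists y', h (phi b) = inr y').
    { intros b. destruct (h (phi b)) as [x'|y'] eqn:E; eauto. exfalso.
      destruct (P3 b) as [E'|L].
      - rewrite E' in E. congruence.
      - specialize (Hh _ _ L). rewrite Ha, E in Hh. exact Hh. }
    exists (fun b => match h (phi b) with inl _ => y | inr y' => y' end).
    split.
    + intros i j Lij. specialize (Hh _ _ (P1 _ _ Lij)).
      destruct (F i) as [yi Ei]; destruct (F j) as [yj Ej].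
      rewrite Ei, Ej in *. exact Hh.
    + intros b. destruct (F b) as [yb Eb]. eapply trans; [apply P2|].
      specialize (Hv (phi b)). rewrite Eb in *. exact Hv.
  - left.
    assert (F : forall b, exists x', h b = inl x').
    { intros b. destruct (h b) as [x'|y'] eqn:E; eauto. exfalso. apply Hn; eauto. }
    destruct (F a0) as [x0 _].
    exists (fun b => match h b with inl x' => x' | inr _ => x0 end).
    split.
    + intros i j Lij. specialize (Hh _ _ Lij).
      destruct (F i) as [yi Ei]; destruct (F j) as [yj Ej].
      rewrite Ei, Ej in *. exact Hh.
    + intros b. destruct (F b) as [yb Eb].
      specialize (Hv b). rewrite Eb in *. exact Hv.
Qed.

Lemma split_catlist Q (leQ : Q -> Q -> Prop)
  (trans : forall x y z, leQ x y -> leQ y z -> leQ x z) s (L : list (tseq Q)) :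
  tailprop leQ s -> inhabited (tidx s) -> seq_embeds leQ s (seq_cat_list L) ->
  exists t, In t L /\ seq_embeds leQ s t.
Proof.
  intros Ht Hi. induction L as [|x L IH]; intros He.
  - destruct Hi as [a0]. destruct He as [h _]. destruct (h a0).
  - destruct (split_cat trans Ht Hi He) as [H|H].
    + exists x; split; [left|]; auto.
    + destruct (IH H) as [t [Ht1 Ht2]]. exists t; split; [right|]; auto.
Qed.

Lemma wf_inh Q (t : tree Q) : wf_tree t -> inhabited (tidx (ftree t)).
Proof.
  induction 1 as [q|ts Hne Hwf IH].
  - constructor. exact tt.
  - destruct ts as [|t0 ts]; [congruence|].
    destruct (IH t0 (or_introl eq_refl)) as [a].
    constructor. simpl. exact (0, inl a).
Qed.

Lemma leaf_le_fwd Q (leQ : Q -> Q -> Prop) x (t : tree Q) :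
  leT leQ (Leaf x) t -> exists i, leQ x (tval (ftree t) i).
Proof.
  revert t. apply (tree_ind2 (fun t => leT leQ (Leaf x) t -> exists i, leQ x (tval (ftree t) i))).
  - intros q H. inversion H; subst. exists tt. simpl. auto.
  - intros ts IH H. inversion H as [|x0 ts0 t Hin Hle|]; subst.
    destruct (IH t Hin Hle) as [i Hi].
    assert (Hin2 : In (ftree t) (map ftree ts)) by (apply in_map; auto).
    destruct (@comp_inj _ _ _ Hin2) as [inj [_ E]].
    exists (0, inj i). simpl. rewrite E. exact Hi.
Qed.

Lemma leaf_le_bwd Q (leQ : Q -> Q -> Prop) x (t : tree Q) :
  (exists i, leQ x (tval (ftree t) i)) -> leT leQ (Leaf x) t.
Proof.
  revert t. apply (tree_ind2 (fun t => (exists i, leQ x (tval (ftree t) i)) -> leT leQ (Leaf x) t)).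
  - intros q [i Hi]. constructor. exact Hi.
  - intros ts IH [[n c] Hi]. simpl in Hi.
    destruct (@cat_val _ _ c) as [s [Hs [a Ha]]].
    apply in_map_iff in Hs. destruct Hs as [t' [E Ht']]. subst s.
    apply leT_leaf_node with t'; auto. apply IH; auto. exists a. rewrite Ha. exact Hi.
Qed.

Lemma max_nat (P : nat -> Prop) M :
  (exists n, P n) -> (forall n, P n -> n <= M) -> exists m, P m /\ forall n, P n -> n <= m.
Proof.
  induction M as [|M IH]; intros [n Hn] Hb.
  - exists n. split; auto. intros n' Hn'. pose proof (Hb n' Hn'). pose proof (Hb n Hn). lia.
  - destruct (classic (P (S M))) as [HP|HP].
    + exists (S M). split; auto.
    + apply IH; [eauto|]. intros n' Hn'. specialize (Hb n' Hn').
      destruct (PeanoNat.Nat.eq_dec n' (S M)); [subst; contradiction| lia].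
Qed.

Unset Implicit Arguments.

Theorem lemma4p18 (Q : Type) (leQ : Q -> Q -> Prop)
  (refl : forall x, leQ x x)
  (trans : forall x y z, leQ x y -> leQ y z -> leQ x z)
  (nonempty : inhabited Q)
  (s t : tree Q) (ws : wf_tree s) (wt : wf_tree t) :
  leT leQ s t <-> seq_embeds leQ (ftree s) (ftree t).
Proof.
  split.
  - clear ws wt. revert t.
    apply (tree_ind2 (fun s => forall t, leT leQ s t -> seq_embeds leQ (ftree s) (ftree t))).
    + intros q t H. apply single_emb. apply leaf_le_fwd. exact H.
    + intros ss IH t H. inversion H; subst. rename ts into ts'.
      destruct (@cat_bound Q leQ (map ftree ss) (seq_cat_list (map ftree ts'))) as [g [G1 [G2 G3]]].
      { intros sg Hsg. apply in_map_iff in Hsg. destruct Hsg as [s' [E Hs']]. subst sg.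
        destruct (H1 s' Hs') as [t' [Ht' Hle]].
        apply emb_trans with (ftree t'); auto.
        apply comp_emb; auto. apply in_map; auto. }
      simpl. eapply omega_bound; eauto.
  - revert ws t wt.
    apply (tree_ind2 (fun s => wf_tree s -> forall t, wf_tree t ->
       seq_embeds leQ (ftree s) (ftree t) -> leT leQ s t)).
    + intros q _ t _ H. apply leaf_le_bwd. apply single_emb_inv. exact H.
    + intros ss IH ws t wt H. inversion ws as [|ss' Hne Hwf]; subst.
      destruct t as [y|ts].
      * exfalso. destruct ss as [|s0 ss]; [congruence|].
        destruct (wf_inh (Hwf s0 (or_introl eq_refl))) as [a0].
        destruct H as [g [Hg _]].
        apply (Hg (0, inl a0) (1, inl a0)). simpl. left. lia.
      * inversion wt as [|ts' Hne' Hwf']; subst.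
        constructor. intros si Hin.
        destruct (wf_inh (Hwf si Hin)) as [a0].
        assert (Hin' : In (ftree si) (map ftree ss)) by (apply in_map; auto).
        destruct (@comp_inj _ _ _ Hin') as [inj [I1 I2]].
        destruct H as [g [Hg Hv]]. simpl in g, Hg, Hv.
        set (M := fst (g (1, inj a0))).
        destruct (@max_nat (fun m => exists a, fst (g (0, inj a)) = m) M)
          as [ms [[astar Ea] Hmax]].
        { exists (fst (g (0, inj a0))). eauto. }
        { intros n [a Ea]. subst n. unfold M.
          destruct (Hg (0, inj a) (1, inj a0)) as [L|[E _]]; [simpl; left; lia| lia| lia]. }
        destruct (tail_ftree leQ refl si astar) as [phi [P1 [P2 P3]]].
        assert (Blk : forall b, fst (g (0, inj (phi b))) = ms).
        { intros b. assert (fst (g (0, inj (phi b))) <= ms) by (apply Hmax; eauto).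
          destruct (P3 b) as [E|L].
          - rewrite E. exact Ea.
          - destruct (Hg (0, inj astar) (0, inj (phi b))) as [L'|[E' _]].
            + simpl. right. split; auto.
            + lia.
            + lia. }
        assert (He : seq_embeds leQ (ftree si) (seq_cat_list (map ftree ts))).
        { exists (fun b => snd (g (0, inj (phi b)))). split.
          - intros i j Lij.
            destruct (Hg (0, inj (phi i)) (0, inj (phi j))) as [L'|[E' L']].
            + simpl. right. split; auto.
            + rewrite !Blk in L'. lia.
            + exact L'.
          - intros b. eapply trans; [apply P2|].
            specialize (Hv (0, inj (phi b))). simpl in Hv. rewrite I2 in Hv. exact Hv. }
        destruct (@split_catlist _ _ trans _ _ (tail_ftree leQ refl si) (wf_inh (Hwf si Hin)) He)
          as [tau [Htau Hemb]].
        apply in_map_iff in Htau. destruct Htau as [tj [E Htj]]. subst tau.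
        exists tj. split; auto.
Qed.
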